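(* For $i\in\{1,\dots,m\}$ let $f_i:\mathbb{R}^n\to\mathbb{R}\cup\{\infty\}$ be proper, lower semicontinuous, convex, and bounded below. Let $r>0$, let $\delta:\Lambda\to\mathbb{R}$ be continuous with $\delta(e_i)=0$ for each canonical unit vector $e_i$ and $\delta(\lambda)>0$ otherwise, and let $PA_r(x,\lambda):=-e_{r+\delta(\lambda)}\big(-\sum_{i=1}^m\lambda_ie_rf_i\big)(x)$. Then for every $\lambda\in\Lambda$, $$\operatorname{argmin}_xPA_r(x,\lambda)=\operatorname{argmin}_x\sum_{i=1}^m\lambda_ie_rf_i(x)=\operatorname{argmin}_x\Big(-e_r\Big(-\sum_{i=1}^m\lambda_ie_rf_i\Big)(x)\Big).$$
   Context: $\Lambda=\{\lambda\in\mathbb{R}^m:\lambda_i\ge0,\ \sum_i\lambda_i=1\}$. Moreau envelope $e_rf(x)=\inf_y\{f(y)+\frac r2|y-x|^2\}$. *)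

(* Defs.v *)
From HB Require Import structures.
From mathcomp Require Import all_boot all_order all_algebra.
From mathcomp Require Import all_classical all_reals all_analysis.
Set Implicit Arguments. Unset Strict Implicit. Unset Printing Implicit Defensive.
Import Order.TTheory GRing.Theory Num.Theory.
Import numFieldNormedType.Exports.
Local Open Scope classical_set_scope.
Local Open Scope ring_scope.

(* Points of R^n are row vectors 'rV[R]_n (product topology = Euclidean topology).
   Squared Euclidean distance |y - x|^2. *)
Definition sqdist (R : realType) (n : nat) (y x : 'rV[R]_n) : R :=
  \sum_(j < n) (y ord0 j - x ord0 j) ^+ 2.

Definition simplex (R : realType) (m : nat) : set 'rV[R]_m :=
  [set l | (forall i, 0 <= l ord0 i) /\ \sum_(i < m) l ord0 i = 1].

Definition unitvec (R : realType) (m : nat) (i : 'I_m) : 'rV[R]_m :=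
  delta_mx ord0 i.

Local Open Scope ereal_scope.

Definition moreau (R : realType) (n : nat) (r : R) (f : 'rV[R]_n -> \bar R)
    (x : 'rV[R]_n) : \bar R :=
  ereal_inf [set f y + ((r / 2) * sqdist y x)%:E | y in [set: 'rV[R]_n]].

Definition argmin (R : realType) (n : nat) (F : 'rV[R]_n -> \bar R) : set 'rV[R]_n :=
  [set x | forall y, F x <= F y].

Definition proper_fun (R : realType) (n : nat) (f : 'rV[R]_n -> \bar R) : Prop :=
  (forall x, f x != -oo) /\ (exists x, f x < +oo).

(* convexity of an extended-real valued function (0 * +oo = 0 convention). *)
Definition convex_efun (R : realType) (n : nat) (f : 'rV[R]_n -> \bar R) : Prop :=
  forall (x y : 'rV[R]_n) (t : R), (0 <= t)%R -> (t <= 1)%R ->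
    f ((t *: x + (1 - t) *: y)%R) <= t%:E * f x + (1 - t)%:E * f y.

Definition bounded_below_efun (R : realType) (n : nat) (f : 'rV[R]_n -> \bar R) : Prop :=
  exists M : R, forall x, M%:E <= f x.

Definition wsum_env (R : realType) (m n : nat) (r : R) (f : 'I_m -> 'rV[R]_n -> \bar R)
    (l : 'rV[R]_m) (x : 'rV[R]_n) : \bar R :=
  \sum_(i < m) (l ord0 i)%:E * moreau r (f i) x.

Definition PA (R : realType) (m n : nat) (r : R) (delta : 'rV[R]_m -> R)
    (f : 'I_m -> 'rV[R]_n -> \bar R) (x : 'rV[R]_n) (l : 'rV[R]_m) : \bar R :=
  - moreau (r + delta l)%R (fun y => - wsum_env r f l y) x.

(* Main.v *)
Require Import Defs.
From HB Require Import structures.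
From mathcomp Require Import all_boot all_order all_algebra.
From mathcomp Require Import all_classical all_reals all_analysis.
From mathcomp Require Import ring lra.
Set Implicit Arguments. Unset Strict Implicit.
Import Order.TTheory GRing.Theory Num.Theory.
Import numFieldNormedType.Exports.
Local Open Scope classical_set_scope.
Local Open Scope ring_scope.

Lemma sqdist_ge0 (R : realType) n (y x : 'rV[R]_n) : 0 <= sqdist y x.
Proof. by apply: sumr_ge0 => j _; exact: sqr_ge0. Qed.

Lemma sqdistxx (R : realType) n (x : 'rV[R]_n) : sqdist x x = 0.
Proof. by rewrite /sqdist big1 // => j _; rewrite subrr expr0n. Qed.

Lemma sqdistC (R : realType) n (y x : 'rV[R]_n) : sqdist y x = sqdist x y.
Proof. by apply: eq_bigr => j _; rewrite -sqrrN opprB. Qed.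

Lemma moreau_fin (R : realType) n (r : R) (f : 'rV[R]_n -> \bar R) :
  0 < r -> proper_fun f -> bounded_below_efun f ->
  forall x, moreau r f x \is a fin_num.
Proof.
move=> r0 [fNy [x0 fx0]] [M fM] x; apply/fin_numP; split.
- rewrite -ltNye; apply: (lt_le_trans (ltNyr M)).
  apply: le_ereal_inf_tmp => _ [y _ <-].
  rewrite -[M%:E]adde0; apply: leeD => //; rewrite lee_fin.
  by apply: mulr_ge0; [rewrite divr_ge0 // ltW | exact: sqdist_ge0].
- rewrite -ltey; apply: (@le_lt_trans _ _ (f x0 + ((r / 2) * sqdist x0 x)%:E)).
    by apply: ereal_inf_lbound; exists x0.
  by apply: lte_add_pinfty => //; exact: ltry.
Qed.

Lemma sqdist_diff (R : realType) n (a z w : 'rV[R]_n) :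
  sqdist a z - sqdist a w =
  \sum_(j < n) (z ord0 j ^+ 2 - w ord0 j ^+ 2 - 2 * a ord0 j * (z ord0 j - w ord0 j)).
Proof. by rewrite /sqdist -sumrB; apply: eq_bigr => j _; ring. Qed.

Lemma wsum_sqdist (R : realType) m n (l : 'rV[R]_m) (Y : 'I_m -> 'rV[R]_n) z w :
  \sum_(i < m) l ord0 i = 1 ->
  \sum_(i < m) l ord0 i * (sqdist (Y i) z - sqdist (Y i) w) =
  sqdist (\sum_(i < m) l ord0 i *: Y i) z - sqdist (\sum_(i < m) l ord0 i *: Y i) w.
Proof.
move=> l1; rewrite sqdist_diff.
under eq_bigr do rewrite sqdist_diff mulr_sumr.
rewrite exchange_big /=; apply: eq_bigr => j _.
rewrite summxE.
rewrite [X in _ = _ - 2 * X * _](eq_bigr (fun k => l ord0 k * Y k ord0 j)); last by move=> k _; rewrite mxE.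
set c := z ord0 j ^+ 2 - w ord0 j ^+ 2; set d := z ord0 j - w ord0 j.
transitivity (\sum_(i < m) (l ord0 i * c) - 2 * (\sum_(i < m) l ord0 i * Y i ord0 j) * d).
  rewrite mulr_sumr mulr_suml -sumrB; apply: eq_bigr => i _; ring.
by rewrite -mulr_suml l1 mul1r.
Qed.

Lemma moreau_le (R : realType) n (r : R) (f : 'rV[R]_n -> \bar R) y x :
  (moreau r f x <= f y + ((r / 2) * sqdist y x)%:E)%E.
Proof. by apply: ereal_inf_lbound; exists y. Qed.

Lemma approx_prox (R : realType) n (r : R) (f : 'rV[R]_n -> \bar R) :
  0 < r -> proper_fun f -> bounded_below_efun f ->
  forall x (e : R), 0 < e -> exists y, f y \is a fin_num /\
    fine (f y) + r / 2 * sqdist y x <= fine (moreau r f x) + e.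
Proof.
move=> r0 fp fb x e e0.
have fin := moreau_fin r0 fp fb x.
have [_ [y _ <-]] := lb_ereal_inf_adherent e0 fin.
rewrite -/(moreau r f x) => hlt.
have fy : f y \is a fin_num.
  apply/fin_numP; split; first by case: fp.
  apply/eqP => fyoo; move: hlt; rewrite fyoo /= -(fineK fin) -EFinD.
  by rewrite ltNge leey.
exists y; split => //.
move: hlt; rewrite -(fineK fin) -(fineK fy) -!EFinD lte_fin => /ltW.
by rewrite fineK.
Qed.

Definition Gf (R : realType) m n (r : R) (f : 'I_m -> 'rV[R]_n -> \bar R)
  (l : 'rV[R]_m) (x : 'rV[R]_n) : R :=
  \sum_(i < m) l ord0 i * fine (moreau r (f i) x).

Lemma keyK (R : realType) m n (r : R) (f : 'I_m -> 'rV[R]_n -> \bar R) (l : 'rV[R]_m) :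
  0 < r -> (forall i, proper_fun (f i)) -> (forall i, bounded_below_efun (f i)) ->
  (forall i, 0 <= l ord0 i) -> \sum_(i < m) l ord0 i = 1 ->
  forall w (e : R), 0 < e -> exists yb : 'rV[R]_n, forall z,
    Gf r f l z <= Gf r f l w + e + r / 2 * (sqdist yb z - sqdist yb w).
Proof.
move=> r0 fp fb l0 l1 w e e0.
have [Y HY] := choice (fun i => approx_prox r0 (fp i) (fb i) w e0).
exists (\sum_(i < m) l ord0 i *: Y i) => z.
rewrite -wsum_sqdist // mulr_sumr /Gf.
apply: (@le_trans _ _ (\sum_(i < m) l ord0 i * (fine (f i (Y i)) + r / 2 * sqdist (Y i) z))).
  apply: ler_sum => i _; apply: ler_wpM2l => //.
  have [fy _] := HY i.
  have := moreau_le r (f i) (Y i) z.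
  rewrite -(fineK fy) -EFinD -(fineK (moreau_fin r0 (fp i) (fb i) z)) lee_fin.
  by [].
have -> : Gf r f l w + e = \sum_(i < m) l ord0 i * (fine (moreau r (f i) w) + e).
  by rewrite /Gf -[e in LHS]mul1r -l1 mulr_suml -big_split /=; apply: eq_bigr => i _; ring.
rewrite -big_split /=; apply: ler_sum => i _.
have [_ H] := HY i.
have hL := l0 i.
set L := l ord0 i in hL *; set c := r / 2 in H *; set Dz := sqdist (Y i) z.
set Dw := sqdist (Y i) w in H *.
set F := fine (f i (Y i)) in H *; set E := fine (moreau r (f i) w) in H *.
have h2 : 0 <= L * (E + e - F - c * Dw) by apply: mulr_ge0 => //; lra.
have -> : L * (E + e) + c * (L * (Dz - Dw)) = L * (F + c * Dz) + L * (E + e - F - c * Dw) by ring.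
lra.
Qed.

Lemma sq_ineq (R : realType) (u v h : R) : 0 < h ->
  2 * u * v <= h * u ^+ 2 + v ^+ 2 / h.
Proof.
move=> h0; set t := v / h.
have hv : v = h * t by rewrite /t mulrCA mulfV ?gt_eqF // mulr1.
have -> : v ^+ 2 / h = h * t ^+ 2 by rewrite hv /t; field; rewrite gt_eqF.
rewrite hv.
have : 0 <= h * (u - t) ^+ 2 by apply: mulr_ge0; [exact: ltW | exact: sqr_ge0].
move=> H; have -> : h * u ^+ 2 + h * t ^+ 2 = 2 * u * (h * t) + h * (u - t) ^+ 2 by ring.
lra.
Qed.

Lemma sqdist_ineq (R : realType) n (b z x : 'rV[R]_n) (h : R) : 0 < h ->
  sqdist b z - sqdist b x <= (1 + h) * sqdist z x + sqdist b x / h.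
Proof.
move=> h0; rewrite /sqdist -sumrB mulr_sumr mulr_suml -big_split /=.
apply: ler_sum => j _.
have := sq_ineq (x ord0 j - z ord0 j) (b ord0 j - x ord0 j) h0.
set u := x ord0 j - z ord0 j; set v := b ord0 j - x ord0 j.
have -> : b ord0 j - z ord0 j = u + v by rewrite /u /v; ring.
have -> : z ord0 j - x ord0 j = - u by rewrite /u; ring.
rewrite sqrrN; move=> H.
have -> : (u + v) ^+ 2 - v ^+ 2 = u ^+ 2 + 2 * u * v by ring.
have -> : (1 + h) * u ^+ 2 + v ^+ 2 / h = u ^+ 2 + (h * u ^+ 2 + v ^+ 2 / h) by ring.
lra.
Qed.

Lemma near_min (R : realType) n (G : 'rV[R]_n -> R) (r : R) (x : 'rV[R]_n) :
  0 < r ->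
  (forall w (e : R), 0 < e -> exists yb : 'rV[R]_n, forall z,
    G z <= G w + e + r / 2 * (sqdist yb z - sqdist yb w)) ->
  (forall z, G x <= G z) ->
  forall z, G z <= G x + r / 2 * sqdist z x.
Proof.
move=> r0 K xmin z.
set D := sqdist z x.
have D0 : 0 <= D by exact: sqdist_ge0.
have step1 : forall h, 0 < h -> G z <= G x + r / 2 * ((1 + h) * D).
  move=> h h0; apply/ler_addgt0Pr => e e0.
  set eps := e * h / (h + 1).
  have eps0 : 0 < eps by rewrite /eps; apply: divr_gt0; [exact: mulr_gt0 | lra].
  have [yb Hyb] := K x eps eps0.
  have H1 := Hyb yb; rewrite sqdistxx in H1.
  have H2 := xmin yb.
  have Hb : r / 2 * sqdist yb x <= eps by lra.
  have H3 := Hyb z.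
  have H4 := sqdist_ineq yb z x h0.
  have r20 : 0 <= r / 2 by lra.
  have H5 := ler_wpM2l r20 H4.
  have H6 : r / 2 * (sqdist yb x / h) <= eps / h.
    by rewrite mulrA ler_pM2r ?invr_gt0.
  have Heps : eps + eps / h = e by rewrite /eps; field; apply/andP; split; rewrite gt_eqF //; lra.
  rewrite mulrDr in H5.
  rewrite -/D in H5 H4.
  lra.
have [D00 | Dpos] := eqVneq D 0.
  by have := step1 1 ltr01; rewrite D00 !mulr0.
have Dp : 0 < D by rewrite lt_neqAle eq_sym Dpos D0.
apply/ler_addgt0Pr => e e0.
have h0 : 0 < e / (r / 2 * D) by apply: divr_gt0 => //; apply: mulr_gt0 => //; lra.
have := step1 _ h0.
have -> : r / 2 * ((1 + e / (r / 2 * D)) * D) = r / 2 * D + e.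
  by field; apply/andP; split; rewrite gt_eqF.
lra.
Qed.

Lemma wsumE (R : realType) m n (r : R) (f : 'I_m -> 'rV[R]_n -> \bar R) (l : 'rV[R]_m) :
  0 < r -> (forall i, proper_fun (f i)) -> (forall i, bounded_below_efun (f i)) ->
  forall x, wsum_env r f l x = (Gf r f l x)%:E.
Proof.
move=> r0 fp fb x; rewrite /wsum_env /Gf -sumEFin; apply: eq_bigr => i _.
by rewrite EFinM fineK // moreau_fin.
Qed.

Lemma argmin_main (R : realType) m n (r s : R) (f : 'I_m -> 'rV[R]_n -> \bar R)
  (l : 'rV[R]_m) :
  0 < r -> r <= s -> (forall i, proper_fun (f i)) -> (forall i, bounded_below_efun (f i)) ->
  (forall i, 0 <= l ord0 i) -> \sum_(i < m) l ord0 i = 1 ->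
  argmin (fun x => (- moreau s (fun y => - wsum_env r f l y) x)%E) = argmin (wsum_env r f l).
Proof.
move=> r0 rs fp fb l0 l1.
have WE := wsumE l r0 fp fb.
set G := Gf r f l.
have K := keyK r0 fp fb l0 l1.
set Q := fun (t : R) x => moreau t (fun y => - wsum_env r f l y)%E x.
have Qa : forall t x, (Q t x <= (- G x)%:E)%E.
  move=> t x; have := moreau_le t (fun y => - wsum_env r f l y)%E x x.
  by rewrite sqdistxx mulr0 adde0 WE.
have Qb : forall x, (Q r x <= Q s x)%E.
  move=> x; apply: le_ereal_inf_tmp => _ [y _ <-]; apply: ge_ereal_inf.
  exists ((- wsum_env r f l y) + (r / 2 * sqdist y x)%:E)%E; first by exists y.
  apply: leeD2l; rewrite lee_fin; apply: ler_wpM2r; first exact: sqdist_ge0.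
  lra.
have Qc : forall w e, 0 < e -> exists yb, ((- G w - e)%:E <= Q r yb)%E.
  move=> w e e0; have [yb Hyb] := K w e e0; exists yb.
  apply: le_ereal_inf_tmp => _ [z _ <-]; rewrite WE -EFinN -EFinD lee_fin.
  have := Hyb z; have := sqdist_ge0 yb w; rewrite (sqdistC z yb).
  have : 0 <= r / 2 by lra.
  move=> h1 h2 h3; have : 0 <= r / 2 * sqdist yb w by exact: mulr_ge0.
  rewrite /G; lra.
have Qd : forall x, (forall z, G x <= G z) -> ((- G x)%:E <= Q s x)%E.
  move=> x xmin; have NM := near_min r0 K xmin.
  apply: le_ereal_inf_tmp => _ [z _ <-]; rewrite WE -EFinN -EFinD lee_fin.
  have := NM z; have := sqdist_ge0 z x.
  have : r / 2 <= s / 2 by lra.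
  move=> h1 h2 h3; have : r / 2 * sqdist z x <= s / 2 * sqdist z x by exact: ler_wpM2r.
  rewrite /G; lra.
apply/seteqP; split => x /= H y.
- rewrite !WE lee_fin; apply/ler_addgt0Pr => e e0.
  have [yb Hyb] := Qc y e e0.
  have H1 := H yb; rewrite leeN2 in H1.
  have : ((- G y - e)%:E <= (- G x)%:E)%E.
    apply: (le_trans Hyb); apply: (le_trans (Qb yb)); apply: (le_trans H1).
    exact: Qa.
  rewrite lee_fin /G; lra.
- rewrite /= leeN2.
  have xmin : forall z, G x <= G z by move=> z; have := H z; rewrite !WE lee_fin.
  apply: (le_trans (Qa s y)); apply: (le_trans _ (Qd x xmin)).
  by rewrite lee_fin lerN2.
Qed.
Unset Implicit Arguments. Set Strict Implicit.

Theorem mainTheorem6 (R : realType) (m n : nat)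
  (f : 'I_m -> 'rV[R]_n -> \bar R) (r : R) (delta : 'rV[R]_m -> R) :
  (forall i, proper_fun (f i)) ->
  (forall i, lower_semicontinuous (f i)) ->
  (forall i, convex_efun (f i)) ->
  (forall i, bounded_below_efun (f i)) ->
  0 < r ->
  {within @simplex R m, continuous delta} ->
  (forall i, delta (unitvec R i) = 0) ->
  (forall l, l \in @simplex R m -> (forall i, l != unitvec R i) -> 0 < delta l) ->
  forall l, l \in @simplex R m ->
    argmin (fun x => PA r delta f x l) = argmin (wsum_env r f l) /\
    argmin (wsum_env r f l) =
      argmin (fun x => (- moreau r (fun y => - wsum_env r f l y) x)%E).
Proof.
move=> fp _ _ fb r0 _ d0 dpos l lS.
have [l0 l1] : (forall i, 0 <= l ord0 i) /\ \sum_(i < m) l ord0 i = 1.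
  by move: lS; rewrite inE.
have dge0 : 0 <= delta l.
  have [[i /eqP li] | ] := pselect (exists i, l == unitvec R i).
    by rewrite li d0.
  move=> nex; apply: ltW; apply: dpos => // i; apply/negP => li.
  by apply: nex; exists i.
split.
  apply: (argmin_main (s := r + delta l) r0 _ fp fb l0 l1); lra.
by rewrite (argmin_main (s := r) r0 (lexx r) fp fb l0 l1).
Qed.
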